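(* Let $R_1,\dots,R_k$ be norms on $\mathbb{R}^p$, $\theta_1^*,\dots,\theta_k^*\in\mathbb{R}^p$, and $\mathcal{C}_i=\operatorname{cone}\{\Delta\in\mathbb{R}^p: R_i(\theta_i^*+\Delta)\le R_i(\theta_i^* )\}$. For $i=1,\dots,k$ define $$\delta_i=\sup\Big\{\langle u,v\rangle:\ u\in(-\mathcal{C}_i)\cap S^{p-1},\ v\in\Big(\sum_{j\ne i}\mathcal{C}_j\Big)\cap S^{p-1}\Big\},$$ and $\delta=\max_i\delta_i$. If $\delta<1$, then there exists $\rho>0$ such that for all $\Delta_i\in\mathcal{C}_i$, $i=1,\dots,k$, $$\Big\|\sum_{i=1}^k\Delta_i\Big\|_2\ \ge\ \rho\sum_{i=1}^k\|\Delta_i\|_2 .$$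
   Context: $\operatorname{cone}(E)$ is the smallest closed cone containing $E$; $S^{p-1}$ is the Euclidean unit sphere in $\mathbb{R}^p$; $\sum_{j\ne i}\mathcal{C}_j$ is the Minkowski sum of the cones. *)

(* Defs.v *)
From HB Require Import structures.
From mathcomp Require Import all_boot all_order all_algebra.
From mathcomp Require Import all_classical all_reals all_analysis.
Set Implicit Arguments. Unset Strict Implicit. Unset Printing Implicit Defensive.
Import Order.TTheory GRing.Theory Num.Theory.
Import numFieldNormedType.Exports.
Local Open Scope classical_set_scope.
Local Open Scope ring_scope.

Definition inner (R : realType) (p : nat) (u v : 'rV[R]_p) : R :=
  \sum_(j < p) u ord0 j * v ord0 j.

Definition enorm (R : realType) (p : nat) (u : 'rV[R]_p) : R :=
  Num.sqrt (inner u u).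

Definition sphere (R : realType) (p : nat) : set 'rV[R]_p :=
  [set u | enorm u = 1].

Definition is_norm (R : realType) (p : nat) (N : 'rV[R]_p -> R) : Prop :=
  [/\ forall x, 0 <= N x,
      forall x, N x = 0 -> x = 0,
      forall (a : R) x, N (a *: x) = `|a| * N x &
      forall x y, N (x + y) <= N x + N y].

Definition is_cone (R : realType) (p : nat) (C : set 'rV[R]_p) : Prop :=
  forall (t : R) x, 0 <= t -> C x -> C (t *: x).

Definition cone_of (R : realType) (p : nat) (E : set 'rV[R]_p) : set 'rV[R]_p :=
  \bigcap_(C in [set C : set 'rV[R]_p | [/\ closed C, is_cone C & E `<=` C]]) C.

Definition tangent_cone (R : realType) (p : nat) (N : 'rV[R]_p -> R)
  (theta : 'rV[R]_p) : set 'rV[R]_p :=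
  cone_of [set D | N (theta + D) <= N theta].

Definition minkowski_sum_but (R : realType) (p k : nat)
  (C : 'I_k -> set 'rV[R]_p) (i : 'I_k) : set 'rV[R]_p :=
  [set x | exists D : 'I_k -> 'rV[R]_p,
     (forall j, j != i -> C j (D j)) /\ x = \sum_(j < k | j != i) D j].

(* delta_i, as an extended real supremum (sup of empty set = -oo) *)
Definition delta_i (R : realType) (p k : nat)
  (C : 'I_k -> set 'rV[R]_p) (i : 'I_k) : \bar R :=
  ereal_sup [set x : \bar R | exists u v : 'rV[R]_p,
     [/\ C i (- u), sphere u, minkowski_sum_but C i v, sphere v
        & x = (inner u v)%:E]].

Definition delta (R : realType) (p k : nat) (C : 'I_k -> set 'rV[R]_p) : \bar R :=
  \big[Order.max/-oo%E]_(i < k) delta_i C i.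

(* Main.v *)
Require Import Defs.
From HB Require Import structures.
From mathcomp Require Import all_boot all_order all_algebra.
From mathcomp Require Import all_classical all_reals all_analysis.
From mathcomp Require Import ring lra.
Import Order.TTheory GRing.Theory Num.Theory.
Local Open Scope classical_set_scope.
Local Open Scope ring_scope.

Set Implicit Arguments.
Section Aux.
Variables (R : realType) (p : nat).
Implicit Types (x y z : 'rV[R]_p).

Lemma innerC x y : inner x y = inner y x.
Proof. by apply: eq_bigr => j _; rewrite mulrC. Qed.

Lemma innerDl x y z : inner (x + y) z = inner x z + inner y z.
Proof. by rewrite /inner -big_split; apply: eq_bigr => j _; rewrite !mxE mulrDl. Qed.

Lemma innerDr x y z : inner x (y + z) = inner x y + inner x z.
Proof. by rewrite innerC innerDl !(innerC x). Qed.

Lemma innerZl (a : R) x y : inner (a *: x) y = a * inner x y.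
Proof. by rewrite /inner mulr_sumr; apply: eq_bigr => j _; rewrite !mxE mulrA. Qed.

Lemma innerNl x y : inner (- x) y = - inner x y.
Proof. by rewrite -scaleN1r innerZl mulN1r. Qed.

Lemma inner_ge0 x : 0 <= inner x x.
Proof. by apply: sumr_ge0 => j _; rewrite -expr2 sqr_ge0. Qed.

Lemma inner_eq0 x : inner x x = 0 -> x = 0.
Proof.
move/eqP; rewrite psumr_eq0; last by move=> j _; rewrite -expr2 sqr_ge0.
move/allP => H; apply/rowP => j; rewrite mxE.
have := H j (mem_index_enum j); rewrite /= mulf_eq0 orbb.
by move/eqP.
Qed.

Lemma inner0l x : inner 0 x = 0.
Proof. by rewrite -(scale0r (0 : 'rV[R]_p)) innerZl mul0r. Qed.

Lemma enormN x : enorm (- x) = enorm x.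
Proof. by rewrite /enorm innerNl innerC innerNl opprK. Qed.

Lemma enorm_ge0 x : 0 <= enorm x.
Proof. exact: sqrtr_ge0. Qed.

Lemma enorm_sqr x : enorm x ^+ 2 = inner x x.
Proof. by rewrite /enorm sqr_sqrtr // inner_ge0. Qed.

Lemma enormZ (a : R) x : enorm (a *: x) = `|a| * enorm x.
Proof.
rewrite /enorm innerZl innerC innerZl mulrA -expr2 sqrtrM ?sqr_ge0 //.
by rewrite sqrtr_sqr.
Qed.

Lemma cone_scale (N : 'rV[R]_p -> R) th (t : R) x :
  0 <= t -> tangent_cone N th x -> tangent_cone N th (t *: x).
Proof.
rewrite /tangent_cone /cone_of => t0 Hx C [clC coneC sub].
apply: (coneC t x t0); move: Hx; rewrite /bigcap /=; apply; by split.
Qed.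


End Aux.
Arguments innerC {R p}. Arguments innerDl {R p}. Arguments innerDr {R p}. Arguments innerZl {R p}. Arguments innerNl {R p}. Arguments inner0l {R p}. Arguments enormZ {R p}. Arguments enormN {R p}. Arguments enorm_sqr {R p}. Arguments inner_eq0 {R p}. Arguments enorm_ge0 {R p}. Arguments cone_scale {R p}.

Theorem theorem2 (R : realType) (p k : nat)
  (N : 'I_k -> 'rV[R]_p -> R) (theta : 'I_k -> 'rV[R]_p) :
  (forall i, is_norm (N i)) ->
  (delta (fun i => tangent_cone (N i) (theta i)) < 1%:E)%E ->
  exists rho : R, 0 < rho /\
    forall Delta : 'I_k -> 'rV[R]_p,
      (forall i, tangent_cone (N i) (theta i) (Delta i)) ->
      enorm (\sum_(i < k) Delta i) >= rho * \sum_(i < k) enorm (Delta i).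
Proof.
move=> _ Hd.
set C := (fun i => tangent_cone (N i) (theta i)) in Hd.
set c : R := Num.max 0 (fine (delta C)).
have c0 : 0 <= c by rewrite /c le_max lexx.
have c1 : c < 1.
  rewrite /c gt_max ltr01 /=.
  by move: Hd; case: (delta C) => //= r; rewrite lte_fin.
have Hc : forall i u v, C i (- u) -> sphere u -> minkowski_sum_but C i v ->
    sphere v -> inner u v <= c.
  move=> i u v H1 H2 H3 H4.
  have H : ((inner u v)%:E <= delta C)%E.
    apply: le_trans (le_bigmax _ _ i).
    apply: le_ereal_sup_tmp; exists (inner u v)%:E => //.
    by exists u, v.
  move: H Hd; rewrite /c; case: (delta C) => [r| |] //=.
  by rewrite !lte_fin lee_fin => H _; rewrite le_max H orbT.
exists ((1 - c) / k.+1%:R); split.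
  by apply: divr_gt0; [lra | rewrite ltr0n].
move=> Delta HD.
set s := \sum_(i < k) Delta i.
have key : forall i, (1 - c) * enorm (Delta i) <= enorm s.
  move=> i.
  set w := \sum_(j < k | j != i) Delta j.
  have sE : s = Delta i + w by rewrite /s (bigD1 i).
  set a := enorm (Delta i); set b := enorm w.
  have a0 : 0 <= a by apply: enorm_ge0.
  have b0 : 0 <= b by apply: enorm_ge0.
  have s0 : 0 <= enorm s by apply: enorm_ge0.
  have Hs2 : enorm s ^+ 2 = a ^+ 2 + 2 * inner (Delta i) w + b ^+ 2.
    rewrite !enorm_sqr sE innerDl !innerDr.
    by rewrite (innerC w (Delta i)); ring.
  have Hin : - (c * a * b) <= inner (Delta i) w.
    have [a00|apos] := eqVneq a 0.
      have /inner_eq0 -> : inner (Delta i) (Delta i) = 0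
        by rewrite -enorm_sqr -/a a00 expr2 mulr0.
      by rewrite inner0l a00 !mulr0 mul0r oppr0.
    have [b00|bpos] := eqVneq b 0.
      have /inner_eq0 -> : inner w w = 0
        by rewrite -enorm_sqr -/b b00 expr2 mulr0.
      by rewrite innerC inner0l b00 !mulr0 oppr0.
    have ap : 0 < a by rewrite lt_def apos a0.
    have bp : 0 < b by rewrite lt_def bpos b0.
    have ai : 0 <= a^-1 by rewrite invr_ge0.
    have bi : 0 <= b^-1 by rewrite invr_ge0.
    have P1 : C i (- - (a^-1 *: Delta i)) by rewrite opprK; apply: cone_scale ai (HD i).
    have P2 : sphere (- (a^-1 *: Delta i)).
      by rewrite /sphere /= enormN enormZ -/a ger0_norm // mulVf.
    have P3 : minkowski_sum_but C i (b^-1 *: w).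
      exists (fun j => b^-1 *: Delta j); split.
        by move=> j _; apply: cone_scale bi (HD j).
      by rewrite /w scaler_sumr.
    have P4 : sphere (b^-1 *: w).
      by rewrite /sphere /= enormZ -/b ger0_norm // mulVf.
    have := Hc i _ _ P1 P2 P3 P4.
    rewrite innerNl innerZl innerC innerZl innerC => H'.
    have abp : 0 < a * b by apply: mulr_gt0.
    have := ler_wpM2r (ltW abp) H'.
    have -> : - (a^-1 * (b^-1 * inner (Delta i) w)) * (a * b) = - inner (Delta i) w.
      by field; rewrite apos bpos.
    by move=> HH; rewrite -mulrA; lra.
  have H2 : ((1 - c) * a) ^+ 2 <= enorm s ^+ 2.
    rewrite Hs2.
    have q1 : 0 <= c * (a - b) ^+ 2 by apply: mulr_ge0 => //; apply: sqr_ge0.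
    have q2 : 0 <= (1 - c) * b ^+ 2 by apply: mulr_ge0; [lra | apply: sqr_ge0].
    have q3 : 0 <= c * (1 - c) * a ^+ 2
      by apply: mulr_ge0; [apply: mulr_ge0 => //; lra | apply: sqr_ge0].
    have e : a ^+ 2 + 2 * (- (c * a * b)) + b ^+ 2 - ((1 - c) * a) ^+ 2
       = c * (a - b) ^+ 2 + (1 - c) * b ^+ 2 + c * (1 - c) * a ^+ 2 by ring.
    lra.
  have H3 : 0 <= (1 - c) * a by apply: mulr_ge0 => //; lra.
  by rewrite -(ler_pXn2r (_ : (0 < 2)%N)) // nnegrE.
have Hsum : (1 - c) * \sum_(i < k) enorm (Delta i) <= enorm s * k%:R.
  have -> : enorm s * k%:R = \sum_(i < k) enorm s.
    by rewrite sumr_const card_ord mulr_natr.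
  rewrite mulr_sumr.
  by apply: ler_sum => i _; apply: key.
have s0 : 0 <= enorm s by apply: enorm_ge0.
have kk : (k%:R : R) <= k.+1%:R by rewrite ler_nat.
have kp : (0 : R) < k.+1%:R by rewrite ltr0n.
rewrite mulrAC ler_pdivrMr //.
apply: le_trans Hsum _.
by apply: ler_wpM2l.
Qed.
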